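(* Let $G=(V,E)$ be a connected undirected graph with at least one edge and let $\lambda$ be the largest eigenvalue of the matrix $K$ defined below. Then every truthful mechanism $M$ for the Vertex Cover set system of $G$ has frugality ratio $\phi_M\ge\lambda/2$.
   Context: A mechanism for a set system takes bids $b$, selects a feasible winning set $S$ and pays each winner $e$ an amount $p_e\ge b_e$; profit is $p_e-c_e$ for winners and $0$ otherwise; truthful means that for every agent and every fixed bids of the others, bidding one's true cost $c_e$ maximizes profit. $p_M(c)$ is the total payment when bids equal costs $c$; $y(X)=\sum_{e\in X}y_e$. Lower bound $\nu(c)$: with $S$ a feasible set minimizing $c(S)$ (ties broken lexicographically), $\nu(c)$ is the maximum of $x(S)$ subject to $x_e\ge c_e$ for all $e$, $x_e=c_e$ for $e\notin S$, and $x(S)\le x(T)$ for all feasible $T$. Frugality ratio $\phi_M=\sup_c p_M(c)/\nu(c)$. Vertex Cover set system of $G$: agents are the vertices, feasible sets are the vertex covers of $G$. $\nu_v=\nu(\mathbf 1_v)$ where $\mathbf 1_v$ has $1$ at $v$, $0$ elsewhere. $K$ is the $V\times V$ matrix with $K_{uv}=1/\nu_u$ if $u\sim v$ and $0$ otherwise (i.e. $K=\mathrm{diag}(1/\nu_v)A$ with $A$ the adjacency matrix); $\lambda$ is its largest (real) eigenvalue. *)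

(* Defs.v *)
From HB Require Import structures.
From mathcomp Require Import all_boot all_order all_algebra.
From Stdlib Require Import ClassicalEpsilon.
Set Implicit Arguments. Unset Strict Implicit. Unset Printing Implicit Defensive.
Import Order.TTheory GRing.Theory Num.Theory.
Local Open Scope ring_scope.

Section VC.
Variable R : realFieldType.
Variable n : nat.
(* the graph: vertices 'I_n, adjacency relation adj (assumed symmetric and
   irreflexive in the theorem) *)
Variable adj : rel 'I_n.

Definition vec := 'I_n -> R.
Definition nonneg (c : vec) : Prop := forall e, 0 <= c e.

Definition wt (y : vec) (X : {set 'I_n}) : R := \sum_(e in X) y e.

Definition is_cover (S : {set 'I_n}) : bool :=
  [forall u, forall v, adj u v ==> (u \in S) || (v \in S)].

(* lexicographic order on vertex sets: compare the increasing lists of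
   their elements lexicographically (a proper prefix is smaller) *)
Fixpoint lex_le (s t : seq nat) : bool :=
  match s, t with
  | [::], _ => true
  | _ :: _, [::] => false
  | x :: s', y :: t' => (x < y)%N || ((x == y) && lex_le s' t')
  end.
Definition elems (S : {set 'I_n}) : seq nat := [seq val i | i <- enum S].

Definition opt_cover (c : vec) (S : {set 'I_n}) : bool :=
  is_cover S &&
  [forall T : {set 'I_n}, is_cover T ==>
     (wt c S < wt c T) || ((wt c S == wt c T) && lex_le (elems S) (elems T))].

Definition optS (c : vec) : {set 'I_n} := odflt setT [pick S | opt_cover c S].

Definition nu_feasible (c : vec) (x : vec) : Prop :=
  (forall e, c e <= x e) /\
  (forall e, e \notin optS c -> x e = c e) /\
  (forall T, is_cover T -> wt x (optS c) <= wt x T).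

Definition is_nu (c : vec) (t : R) : Prop :=
  (exists x, nu_feasible c x /\ wt x (optS c) = t) /\
  (forall x, nu_feasible c x -> wt x (optS c) <= t).

(* nu(c): the maximum (which exists: the LP is feasible and bounded) *)
Definition nu (c : vec) : R := epsilon (inhabits 0) (is_nu c).

Definition unitv (v : 'I_n) : vec := fun e => if e == v then 1 else 0.

Definition Kmx : 'M[R]_n :=
  \matrix_(u, v) (if adj u v then (nu (unitv u))^-1 else 0).

Record mechanism := Mechanism {
  win : vec -> {set 'I_n};
  pay : vec -> 'I_n -> R }.

Definition valid_mech (M : mechanism) : Prop :=
  forall b, nonneg b ->
    is_cover (win M b) /\ (forall e, e \in win M b -> b e <= pay M b e).

Definition upd (b : vec) (e : 'I_n) (x : R) : vec :=
  fun j => if j == e then x else b j.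

Definition profit (M : mechanism) (b : vec) (e : 'I_n) (ce : R) : R :=
  if e \in win M b then pay M b e - ce else 0.

Definition truthful (M : mechanism) : Prop :=
  forall (e : 'I_n) (ce : R) (b : vec), 0 <= ce -> nonneg b ->
    forall x, 0 <= x -> profit M (upd b e x) e ce <= profit M (upd b e ce) e ce.

Definition total_pay (M : mechanism) (c : vec) : R :=
  \sum_(e in win M c) pay M c e.

(* phi_M = sup_c p_M(c)/nu(c) >= t, with the extended-real conventions
   p/0 = +oo for p > 0 and 0/0 excluded *)
Definition frugality_ge (M : mechanism) (t : R) : Prop :=
  forall r, r < t -> exists c, nonneg c /\ r * nu c < total_pay M c.

End VC.

(* Main.v *)
Require Import Defs.
From HB Require Import structures.
From mathcomp Require Import all_boot all_order all_algebra.
From Stdlib Require Import Classical ClassicalEpsilon FunctionalExtensionality.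
Import Order.TTheory GRing.Theory Num.Theory.
Local Open Scope ring_scope.

Module Helpers.
Set Implicit Arguments. Unset Strict Implicit. Unset Printing Implicit Defensive.
Lemma exists_min (T : eqType) (le : rel T) (tot : total le) (tr : transitive le)
  (s : seq T) x0 : x0 \in s -> exists2 m, m \in s & forall y, y \in s -> le m y.
Proof.
elim: s x0 => [//|a s IH] x0 _.
case: s IH => [|b s] IH.
  exists a; first by rewrite inE.
  by move=> y; rewrite inE => /eqP ->; case/orP: (tot a a).
have [m ms mmin] := IH b (mem_head _ _).
case/orP: (tot a m) => H.
  exists a; first exact: mem_head.
  move=> y; rewrite inE => /orP[/eqP ->|ys]; first by case/orP: (tot a a).
  exact: tr H (mmin _ ys).
exists m; first by rewrite inE ms orbT.
by move=> y; rewrite inE => /orP[/eqP ->|ys]; [|exact: mmin].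
Qed.

Section FM.
Variable R : realFieldType.
Variable I : finType.
Definition cons_t := ({ffun I -> R} * R)%type.
Definition lin (a : {ffun I -> R}) (x : I -> R) := \sum_i a i * x i.
Definition sat (cs : seq cons_t) (x : I -> R) := all (fun c => lin c.1 x <= c.2) cs.
Definition updf (x : I -> R) (j : I) (y : R) := fun i => if i == j then y else x i.
Implicit Types (a b : {ffun I -> R}) (x : I -> R) (i j : I) (y s t : R) (cs : seq cons_t).

Lemma lin_upd a x j y : lin a (updf x j y) = lin a x + a j * (y - x j).
Proof.
apply/eqP; rewrite addrC -subr_eq /lin -sumrB (bigD1 j) //= big1 ?addr0.
  by rewrite /updf eqxx mulrBr.
by move=> i ij; rewrite /updf (negbTE ij) subrr.
Qed.

Lemma lin_upd0 a x j y : a j = 0 -> lin a (updf x j y) = lin a x.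
Proof. by move=> H; rewrite lin_upd H mul0r addr0. Qed.

Lemma lin_comb s t a b x :
  lin [ffun i => s * a i + t * b i] x = s * lin a x + t * lin b x.
Proof.
rewrite /lin !mulr_sumr -big_split /=; apply: eq_bigr => i _.
by rewrite ffunE mulrDl !mulrA.
Qed.

Definition comb (j : I) (p q : cons_t) : cons_t :=
  ([ffun i => - q.1 j * p.1 i + p.1 j * q.1 i], - q.1 j * p.2 + p.1 j * q.2).

Definition fm j cs : seq cons_t := [seq c <- cs | (c : cons_t).1 j == 0] ++
  [seq comb j p q | p <- [seq c <- cs | 0 < (c : cons_t).1 j], q <- [seq c <- cs | (c : cons_t).1 j < 0]].

Lemma comb_j j p q : (comb j p q).1 j = 0.
Proof. by rewrite /= ffunE mulNr [X in - X + _]mulrC addNr. Qed.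

Lemma fm_zero j cs c : c \in fm j cs -> c.1 j = 0.
Proof.
rewrite mem_cat => /orP[|/allpairsP [[p q] [_ _ ->]]]; last exact: comb_j.
by rewrite mem_filter => /andP[/eqP].
Qed.

Lemma fm_pres j cs i : (forall c, c \in cs -> c.1 i = 0) ->
  forall c, c \in fm j cs -> c.1 i = 0.
Proof.
move=> H c; rewrite mem_cat => /orP[|/allpairsP [[p q] [pP qN ->]]].
  by rewrite mem_filter => /andP[_ /H].
move: pP qN; rewrite !mem_filter => /andP[_ /H Hp] /andP[_ /H Hq].
by rewrite /= ffunE Hp Hq !mulr0 addr0.
Qed.

Lemma z4 (a b c d : R) : b - d - (a - c) = -a + b - (-c + d).
Proof. rewrite opprB opprD opprK (addrC (-a) b) -!addrA; congr (_ + _).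
by rewrite (addrC c) addrCA (addrC (-d)). Qed.
Lemma aux (A B C D P Q : R) :
  -Q*C + P*D <= -Q*A + P*B -> (A - C) * Q <= (B - D) * P.
Proof.
rewrite -subr_ge0 => H; rewrite -subr_ge0.
suff -> : (B-D)*P - (A-C)*Q = -Q*A + P*B - (-Q*C + P*D) by [].
by rewrite !mulrBl !mulNr (mulrC Q A) (mulrC Q C) (mulrC P B) (mulrC P D) z4.
Qed.

Lemma exists_between (us ls : seq R) :
  (forall l u, l \in ls -> u \in us -> l <= u) ->
  exists y, (forall u, u \in us -> y <= u) /\ (forall l, l \in ls -> l <= y).
Proof.
case: us => [|u0 us] H.
  exists (\sum_(l <- ls) `|l|); split=> // l ll.
  apply: le_trans (real_ler_norm (num_real l)) _.
  rewrite (big_rem l ll) /= lerDl; apply: sumr_ge0 => *; exact: normr_ge0.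
have [m mi mmin] := @exists_min _ (fun r1 r2 : R => r1 <= r2) (@le_total _ _)
   (fun r1 r2 r3 : R => @le_trans _ _ r1 r2 r3) (u0 :: us) u0 (mem_head _ _).
exists m; split; first exact: mmin.
by move=> l ll; apply: H.
Qed.

Lemma fm_sat j cs x : sat (fm j cs) x <-> exists y, sat cs (updf x j y).
Proof.
split; last first.
  move=> [y /allP Hy]; apply/allP => c; rewrite mem_cat.
  case/orP=> [|/allpairsP [[p q] [pP qN ->]]].
    rewrite mem_filter => /andP[/eqP cj cs']; move: (Hy c cs').
    by rewrite lin_upd0.
  move: pP qN => /=; rewrite !mem_filter => /andP[pj pcs] /andP[qj qcs] /=.
  rewrite -(@lin_upd0 _ x j y (comb_j j p q)) lin_comb.
  apply: lerD; apply: ler_wpM2l.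
  - by rewrite oppr_ge0 ltW.
  - exact: (Hy p pcs).
  - exact: ltW.
  - exact: (Hy q qcs).
move=> /allP H.
pose P := [seq c <- cs | 0 < (c : cons_t).1 j]; pose N := [seq c <- cs | (c : cons_t).1 j < 0].
pose U (p : cons_t) := (p.2 - lin p.1 x) / p.1 j + x j.
pose L (q : cons_t) := (q.2 - lin q.1 x) / q.1 j + x j.
have key : forall p q, p \in P -> q \in N -> L q <= U p.
  move=> p q pP qN.
  have Hc : lin (comb j p q).1 x <= (comb j p q).2.
    by apply: H; rewrite mem_cat; apply/orP; right; apply/allpairsP; exists (p, q).
  move: pP qN; rewrite !mem_filter => /andP[pj _] /andP[qj _].
  move: Hc; rewrite lin_comb /= /U /L lerD2r => Hc.
  rewrite ler_ndivrMr // mulrAC ler_pdivrMr //; exact: aux.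
have [y [yU yL]] := @exists_between [seq U p | p <- P] [seq L q | q <- N] 
  (fun l u lN uP => match mapP lN, mapP uP with
     | ex_intro2 q qN El, ex_intro2 p pP Eu => ltac:(rewrite El Eu; exact: key) end).
exists y; apply/allP => c ccs; rewrite /= lin_upd.
case: (ltrgtP (c.1 j) 0) => cj.
- have cN : c \in N by rewrite mem_filter cj.
  have := yL _ (map_f L cN); rewrite /L -lerBrDr ler_ndivrMr // mulrC => Hy.
  by rewrite addrC -lerBrDr.
- have cP : c \in P by rewrite mem_filter cj.
  have := yU _ (map_f U cP); rewrite /U -lerBlDr ler_pdivlMr // mulrC => Hy.
  by rewrite addrC -lerBrDr.
- rewrite cj mul0r addr0; apply: H; rewrite mem_cat mem_filter cj eqxx ccs //.
Qed.
End FM.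

Section FMiter.
Variable R : realFieldType.
Variable I : finType.
Implicit Types (x y z : I -> R) (cs : seq (cons_t R I)).

Lemma lin_ext (a : {ffun I -> R}) x z : (forall i, x i = z i) -> lin a x = lin a z.
Proof. by move=> H; apply: eq_bigr => i _; rewrite H. Qed.

Lemma sat_ext cs x z : (forall i, x i = z i) -> sat cs x = sat cs z.
Proof. by move=> H; apply: eq_all => c; rewrite (lin_ext _ H). Qed.

Definition merge (J : seq I) y x := fun i => if i \in J then y i else x i.

Lemma fm_iter (J : seq I) cs : exists cs' : seq (cons_t R I),
  (forall c, c \in cs' -> forall j, j \in J -> c.1 j = 0) /\
  forall x, sat cs' x <-> exists y, sat cs (merge J y x).
Proof.
elim: J => [|j J [cs1 [Z1 E1]]].
  exists cs; split=> // x; split=> [H|[y]]; first by exists x; rewrite (sat_ext _ (z:=x)).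
  by rewrite (sat_ext _ (z:=x)).
exists (fm j cs1); split.
  move=> c cin j'; rewrite inE => /orP[/eqP ->|j'J]; first exact: fm_zero cin.
  by apply: (fm_pres (cs:=cs1) (j:=j) _ cin) => c' /Z1; apply.
move=> x; split.
  move=> /fm_sat [y0 /E1 [y Hy]].
  exists (fun i => if i \in J then y i else y0).
  rewrite -(@sat_ext _ (merge J y (updf x j y0))) // => i.
  rewrite /merge /updf inE; case: (i \in J); rewrite ?orbT ?orbF //.
move=> [y Hy]; apply/fm_sat; exists (y j); apply/E1; exists y.
rewrite (@sat_ext _ _ (merge (j :: J) y x)) // => i.
rewrite /merge /updf inE; case: (i \in J); rewrite ?orbT ?orbF //.
by case: eqP => [->|].
Qed.
End FMiter.

Section LP.
Variable R : realFieldType.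
Variable I : finType.
Implicit Types (x y z : I -> R) (cs : seq (cons_t R I)).

Lemma option_sum (F : option I -> R) :
  \sum_(o : option I) F o = F None + \sum_(i : I) F (Some i).
Proof.
rewrite /index_enum !unlock /=; congr (_ + _).
by rewrite /reducebig foldr_map !unlock.
Qed.

Definition liftc (c : cons_t R I) : cons_t R (option I) :=
  ([ffun o => if o is Some i then c.1 i else 0], c.2).
Definition objc (f : {ffun I -> R}) : cons_t R (option I) :=
  ([ffun o => if o is Some i then - f i else 1], 0).

Lemma lin_liftc c (w : option I -> R) : lin (liftc c).1 w = lin c.1 (fun i => w (Some i)).
Proof. by rewrite /lin option_sum !ffunE mul0r add0r; apply: eq_bigr => i _; rewrite ffunE. Qed.

Lemma lin_objc f (w : option I -> R) :
  lin (objc f).1 w = w None - lin f (fun i => w (Some i)).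
Proof.
rewrite /lin option_sum !ffunE mul1r -sumrN; congr (_ + _).
by apply: eq_bigr => i _; rewrite ffunE mulNr.
Qed.

Lemma lp_max cs (f : {ffun I -> R}) :
  (exists x, sat cs x) -> (exists B, forall x, sat cs x -> lin f x <= B) ->
  exists x, sat cs x /\ forall z, sat cs z -> lin f z <= lin f x.
Proof.
move=> [x0 Hx0] [B HB].
pose cs0 := objc f :: map liftc cs.
pose J := [seq Some i | i <- enum I].
have [cs' [Z E]] := fm_iter J cs0.
pose T t := sat cs' (fun _ => t).
have inJ : forall i, Some i \in J by move=> i; apply: map_f; rewrite mem_enum.
have noJ : None \notin J by apply/mapP => -[].
have TE : forall t, T t <-> exists x, sat cs x /\ t <= lin f x.
  move=> t; split.
    move=> /E [y Hy]; exists (fun i => y (Some i)).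
    move: Hy; rewrite /sat /= lin_objc /merge (negbTE noJ) all_map => /andP[H1 H2].
    have Hm : forall i, (if Some i \in J then y (Some i) else t) = y (Some i).
      by move=> i; rewrite inJ.
    split; last by move: H1; rewrite (lin_ext _ Hm) subr_le0.
    by move: H2; apply: sub_all => c /=; rewrite lin_liftc /merge (lin_ext _ Hm).
  move=> [x [Hx Ht]]; apply/E; exists (fun o => if o is Some i then x i else t).
  rewrite /sat /= lin_objc /merge (negbTE noJ) all_map; apply/andP; split.
    have Hm : forall i, (if Some i \in J then x i else t) = x i.
      by move=> i; rewrite inJ.
    by rewrite subr_le0 (lin_ext _ Hm).
  have Hm : forall i, (if Some i \in J then x i else t) = x i.
    by move=> i; rewrite inJ.
  by move: Hx; apply: sub_all => c /=; rewrite lin_liftc /merge (lin_ext _ Hm).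
have lin1 : forall c, c \in cs' -> forall w, lin c.1 w = c.1 None * w None.
  move=> c cin w; rewrite /lin option_sum big1 ?addr0 // => i _.
  by rewrite (Z c cin _ (inJ i)) mul0r.
have TP : forall t, T t <-> forall c, c \in cs' -> c.1 None * t <= c.2.
  move=> t; rewrite /T; split.
    by move=> /allP H c cin; rewrite -(lin1 c cin (fun _ => t)); apply: H.
  by move=> H; apply/allP => c cin /=; rewrite (lin1 c cin); apply: H.
pose ups := map (fun c : cons_t R (option I) => c.2 / c.1 None) (filter (fun c : cons_t R (option I) => 0 < c.1 None) cs').
have Tup : forall t, T t -> forall u, u \in ups -> t <= u.
  move=> t /TP Ht u /mapP [c]; rewrite mem_filter => /andP[cpos cin] ->.
  by rewrite ler_pdivlMr // mulrC; apply: Ht.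
have T0 : T (lin f x0) by apply/TE; exists x0.
have TB : forall t, T t -> t <= B.
  by move=> t /TE [x [Hx Ht]]; apply: le_trans Ht (HB _ Hx).
have [u0 u0in] : exists u0, u0 \in ups.
  case E0 : ups => [|u0 us]; last by exists u0; rewrite mem_head.
  exfalso.
  pose t1 := Num.max (lin f x0) (B + 1).
  have : T t1.
    move/TP: T0 => H0; apply/TP => c cin.
    case: (ltrgtP (c.1 None) 0) => cj.
    - apply: le_trans (H0 c cin); apply: ler_wnM2l; first exact: ltW.
      by rewrite le_max lexx.
    - have : (c.2 / c.1 None) \in ups.
        by apply: map_f; rewrite mem_filter cj.
      by rewrite E0.
    - by move: (H0 c cin); rewrite cj !mul0r.
  move/TB => H; have : B + 1 <= B by apply: le_trans H; rewrite le_max lexx orbT.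
  by rewrite gerDl ler10.
have [m min mmin] := @exists_min _ (fun r1 r2 : R => r1 <= r2) (@le_total _ _)
   (fun r1 r2 r3 : R => @le_trans _ _ r1 r2 r3) ups u0 u0in.
have Tm : T m.
  move/TP: (T0) => H0; apply/TP => c cin.
  case: (ltrgtP (c.1 None) 0) => cj.
  - apply: le_trans (H0 c cin); apply: ler_wnM2l; first exact: ltW.
    exact: Tup T0 m min.
  - have cu : c.2 / c.1 None \in ups by apply: map_f; rewrite mem_filter cj.
    by have := mmin _ cu; rewrite ler_pdivlMr // mulrC.
  - by move: (H0 c cin); rewrite cj !mul0r.
have [xs [Hxs Hm]] := (TE m).1 Tm.
exists xs; split => // z Hz.
by apply: le_trans Hm; apply: Tup min; apply/TE; exists z; split.
Qed.
End LP.

Lemma lex_total s t : lex_le s t || lex_le t s.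
Proof.
elim: s t => [|x s IH] [|y t] //=.
case: (ltngtP x y) => //= ->; rewrite eqxx /=; exact: IH.
Qed.

Lemma lex_trans : transitive lex_le.
Proof.
move=> t s; elim: s t => [|x s IH] [|y t] [|z u] //=.
case/orP=> [yx|/andP[/eqP <- Hst]]; case/orP=> [xz|/andP[/eqP <- Htu]].
- by rewrite (ltn_trans yx xz).
- by rewrite yx.
- by rewrite xz.
- by rewrite eqxx (IH _ _ Hst Htu) orbT.
Qed.

Section VCfacts.
Variable R : realFieldType.
Variable n : nat.
Variable adj : rel 'I_n.
Hypothesis adj_irr : irreflexive adj.
Implicit Types (c x : vec R n) (S T X : {set 'I_n}) (u v e : 'I_n).

Definition ple (c : vec R n) (S T : {set 'I_n}) :=
  (wt c S < wt c T) || ((wt c S == wt c T) && lex_le (elems S) (elems T)).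

Lemma ple_total c : total (ple c).
Proof.
move=> S T; rewrite /ple eq_sym.
case: (ltrgtP (wt c S) (wt c T)) => //= _; exact: lex_total.
Qed.

Lemma ple_trans c : transitive (ple c).
Proof.
move=> T S U; rewrite /ple.
case/orP=> [H1|/andP[/eqP E1 L1]]; case/orP=> [H2|/andP[/eqP E2 L2]].
- by rewrite (lt_trans H1 H2).
- by rewrite -E2 H1.
- by rewrite E1 H2.
- by rewrite E1 E2 eqxx (lex_trans L1 L2) orbT.
Qed.

Lemma setT_cover : is_cover adj setT.
Proof. by apply/forallP => u; apply/forallP => v; rewrite in_setT implybT. Qed.

Lemma optS_opt c : opt_cover adj c (optS adj c).
Proof.
rewrite /optS; case: pickP => [S //|H]; exfalso.
have Ht : setT \in enum (fun T : {set 'I_n} => is_cover adj T).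
  by rewrite mem_enum; exact: setT_cover.
have tot : total (ple c) by move=> S T; exact: ple_total.
have tr : transitive (ple c) by move=> S T U; exact: ple_trans.
have [m min mmin] := @exists_min _ (ple c) tot tr _ _ Ht.
have mc : is_cover adj m by rewrite mem_enum in min.
move: (H m); rewrite /opt_cover mc /= => /negbT/negP; apply.
apply/forallP => T; apply/implyP => Tc.
by apply: mmin; rewrite mem_enum.
Qed.

Lemma optS_cover c : is_cover adj (optS adj c).
Proof. by case/andP: (optS_opt c). Qed.

Lemma optS_min c T : is_cover adj T -> wt c (optS adj c) <= wt c T.
Proof.
move=> Tc; case/andP: (optS_opt c) => _ /forallP /(_ T); rewrite Tc /=.
by case/orP=> [/ltW //|/andP[/eqP -> _]]; rewrite lexx.
Qed.


Lemma cover_minus e : is_cover adj (~: [set e]).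
Proof.
apply/forallP => u; apply/forallP => v; apply/implyP => uv.
rewrite !in_setC !in_set1; case: eqP => [ue|//]; case: eqP => [ve|//] /=.
by move: uv; rewrite ue ve adj_irr.
Qed.

Lemma nu_spec c t : is_nu adj c t -> nu adj c = t.
Proof.
move=> H; rewrite /nu.
have := epsilon_spec (inhabits 0) (is_nu adj c) (ex_intro _ t H).
set t' := epsilon _ _ => H'.
case: H => [[x1 [F1 E1]] B1]; case: H' => [[x2 [F2 E2]] B2].
apply: le_anti; apply/andP; split; [rewrite -E2; exact: B1 | rewrite -E1; exact: B2].
Qed.

Lemma wt_split x S : wt x S + wt x (~: S) = \sum_i x i.
Proof.
rewrite /wt (bigID (fun i => i \in S) predT) /=; congr (_ + _).
by apply: eq_bigl => i; rewrite in_setC.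
Qed.

Lemma wt_minus x e : wt x (~: [set e]) = \sum_i x i - x e.
Proof.
by rewrite -(wt_split x [set e]) /wt big_set1 addrC addKr.
Qed.

Definition ge_c c e : cons_t R 'I_n := ([ffun i => - (i == e)%:R], - c e).
Definition le_c c e : cons_t R 'I_n := ([ffun i => (i == e)%:R], c e).
Definition cv_c S T : cons_t R 'I_n :=
  ([ffun i => (i \in S)%:R - (i \in T)%:R], 0).
Definition lpcs c : seq (cons_t R 'I_n) :=
  map (ge_c c) (enum [set: 'I_n]) ++ map (le_c c) (enum (~: optS adj c)) ++
  map (cv_c (optS adj c)) (enum (fun T : {set 'I_n} => is_cover adj T)).

Lemma lin_delta e x : lin [ffun i => (i == e)%:R] x = x e.
Proof.
rewrite /lin (bigD1 e) //= big1 ?addr0 ?ffunE ?eqxx ?mul1r // => i ie.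
by rewrite ffunE (negbTE ie) mul0r.
Qed.

Lemma lin_ind S x : lin [ffun i => (i \in S)%:R] x = wt x S.
Proof.
rewrite /lin /wt [RHS]big_mkcond; apply: eq_bigr => i _; rewrite ffunE.
by case: (i \in S); rewrite ?mul1r ?mul0r.
Qed.

Lemma lin_cv S T x : lin [ffun i => (i \in S)%:R - (i \in T)%:R] x = wt x S - wt x T.
Proof.
rewrite -!lin_ind /lin -sumrB; apply: eq_bigr => i _; rewrite !ffunE.
by rewrite mulrBl.
Qed.

Lemma lin_ge e x : lin [ffun i => - (i == e)%:R] x = - x e.
Proof.
rewrite -lin_delta /lin -sumrN; apply: eq_bigr => i _; rewrite !ffunE.
by rewrite mulNr.
Qed.

Lemma sat_lp c x : sat (lpcs c) x <-> nu_feasible adj c x.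
Proof.
rewrite /sat /lpcs !all_cat !all_map; split.
  case/and3P => /allP H1 /allP H2 /allP H3; split; last split.
  - move=> e; have ein : e \in enum [set: 'I_n] by rewrite mem_enum in_setT.
    move: (H1 e ein); rewrite /= lin_ge.
    by rewrite lerN2.
  - move=> e eS; have e1 : e \in enum (~: optS adj c) by rewrite mem_enum in_setC.
    have ein : e \in enum [set: 'I_n] by rewrite mem_enum in_setT.
    move: (H2 e e1) (H1 e ein); rewrite /= lin_delta lin_ge lerN2 => Ha Hb.
    by apply: le_anti; rewrite Ha Hb.
  - move=> T Tc; have : T \in enum (fun T : {set 'I_n} => is_cover adj T).
      by rewrite mem_enum.
    by move/H3; rewrite /= lin_cv subr_le0.
case=> [H1 [H2 H3]]; apply/and3P; split; apply/allP.
- by move=> e _ /=; rewrite lin_ge lerN2.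
- move=> e; rewrite mem_enum in_setC => eS /=; rewrite lin_delta H2 //.
- move=> T; rewrite mem_enum => Tc /=; rewrite lin_cv subr_le0; exact: H3.
Qed.

Lemma nu_exists c :
  (exists x, nu_feasible adj c x /\ wt x (optS adj c) = nu adj c) /\
  (forall z, nu_feasible adj c z -> wt z (optS adj c) <= nu adj c).
Proof.
set S := optS adj c.
have feas0 : sat (lpcs c) c.
  apply/sat_lp; split=> //; split=> // T Tc; exact: optS_min.
have bnd : forall x, nu_feasible adj c x -> wt x S <= \sum_(e in S) wt c (~: S).
  move=> x [H1 [H2 H3]]; apply: ler_sum => e eS.
  have E : wt x (~: S) = wt c (~: S).
    by apply: eq_bigr => i; rewrite in_setC; apply: H2.
  rewrite -E; have := H3 _ (cover_minus e); rewrite wt_minus -(wt_split x S).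
  by rewrite -/S -addrA lerDl subr_ge0.
have bnd' : exists B, forall x, sat (lpcs c) x -> lin [ffun i => (i \in S)%:R] x <= B.
  exists (\sum_(e in S) wt c (~: S)) => x /sat_lp Hx; rewrite lin_ind; exact: bnd.
have [xs [Hs Hmax]] := lp_max (ex_intro _ c feas0) bnd'.
have Hnu : is_nu adj c (wt xs S).
  split; first by exists xs; split => //; apply/sat_lp.
  by move=> x /sat_lp Hx; move: (Hmax x Hx); rewrite !lin_ind.
rewrite (nu_spec Hnu); split; first by exists xs; split => //; apply/sat_lp.
by case: Hnu.
Qed.

Lemma wt_scale a c c' (H : forall e, c' e = a * c e) S : wt c' S = a * wt c S.
Proof. by rewrite /wt mulr_sumr; apply: eq_bigr => e _; rewrite H. Qed.

Lemma wt_sc a x S : wt (fun e => a * x e) S = a * wt x S.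
Proof. exact: wt_scale. Qed.

Lemma optS_scale a c c' : 0 < a -> (forall e, c' e = a * c e) -> optS adj c' = optS adj c.
Proof.
move=> ha H; rewrite /optS; congr odflt; apply: eq_pick => S /=.
rewrite /opt_cover; congr (_ && _); apply: eq_forallb => T.
rewrite !(wt_scale H) ltr_pM2l // (inj_eq (mulfI (negbT (gt_eqF ha)))) //.
Qed.

Lemma feas_scale a c c' x : 0 < a -> (forall e, c' e = a * c e) ->
  nu_feasible adj c x -> nu_feasible adj c' (fun e => a * x e).
Proof.
move=> ha H [H1 [H2 H3]]; rewrite /nu_feasible (optS_scale ha H); split; last split.
- by move=> e; rewrite H ler_pM2l.
- by move=> e eS; rewrite H H2.
- move=> T Tc; rewrite !wt_sc ler_pM2l //; exact: H3.
Qed.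

Lemma nu_scale a c c' : 0 < a -> (forall e, c' e = a * c e) ->
  nu adj c' = a * nu adj c.
Proof.
move=> ha H; apply: nu_spec; rewrite /is_nu (optS_scale ha H); split.
  have [[x [Fx Ex]] _] := nu_exists c.
  exists (fun e => a * x e); split; first exact: feas_scale.
  by rewrite -Ex wt_sc.
move=> z Fz.
have ha' : 0 < a^-1 by rewrite invr_gt0.
have H' : forall e, c e = a^-1 * c' e by move=> e; rewrite H mulrA mulVf ?mul1r // gt_eqF.
have := (nu_exists c).2 _ (feas_scale ha' H' Fz).
rewrite wt_sc -(ler_pM2l ha) mulrA mulfV ?mul1r //.
by rewrite gt_eqF.
Qed.

Lemma wt_unit u X : wt (unitv R u) X = (u \in X)%:R.
Proof.
rewrite /wt /unitv -big_mkcondr; case: (boolP (u \in X)) => uX.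
  rewrite (eq_bigl (pred1 u)) ?big_pred1_eq // => e /=.
  by case: eqP => [->|]; rewrite ?andbF ?andbT.
rewrite big_pred0 // => e; case: eqP => [->|]; rewrite ?andbF ?andbT //.
exact: negbTE.
Qed.

Lemma nu_unit_ge1 u v : adj u v -> 1 <= nu adj (unitv R u).
Proof.
move=> uv; set c := unitv R u; set S := optS adj c.
have uvne : u != v by apply/eqP => E; move: uv; rewrite E adj_irr.
have uS : u \notin S.
  apply/negP => uS; have := optS_min c (cover_minus u).
  by rewrite -/S !wt_unit uS !inE eqxx /= ler10.
have vS : v \in S.
  have := optS_cover c; rewrite -/S => /forallP /(_ u) /forallP /(_ v).
  by rewrite uv (negbTE uS).
pose x := fun e => unitv R u e + unitv R v e.
have wx : forall X, wt x X = (u \in X)%:R + (v \in X)%:R.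
  by move=> X; rewrite /wt big_split /= -!/(wt _ _) !wt_unit.
have Fx : nu_feasible adj c x.
  split; last split.
  - by move=> e; rewrite /x /c lerDl /unitv; case: (e == v).
  - move=> e eS; rewrite /x /c /unitv.
    have -> : (e == v) = false by apply/negbTE; apply: contraNneq eS => ->.
    by rewrite addr0.
  - move=> T Tc; rewrite -/S !wx (negbTE uS) vS add0r.
    move/forallP: Tc => /(_ u) /forallP /(_ v); rewrite uv /=.
    case/orP => ->; rewrite ?lerDl ?lerDr //; case: (_ \in _) => //.
have := (nu_exists c).2 _ Fx; rewrite -/S wx (negbTE uS) vS add0r //.
Qed.

End VCfacts.

End Helpers.
Import Helpers.

Theorem mainTheorem3 (R : realFieldType) (n : nat) (adj : rel 'I_n)
  (adj_sym : symmetric adj) (adj_irr : irreflexive adj)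
  (conn : forall u v : 'I_n, connect adj u v)
  (has_edge : exists u v : 'I_n, adj u v)
  (lam : R)
  (lam_eig : eigenvalue (Kmx R adj) lam)
  (lam_max : forall m : R, eigenvalue (Kmx R adj) m -> m <= lam)
  (M : mechanism R n) (M_valid : valid_mech adj M) (M_truthful : truthful M) :
  frugality_ge adj M (lam / 2).
Proof.
move=> r rlt.
have nb : forall u, exists v, adj u v.
  move=> u; case: has_edge => a [b ab].
  case: (eqVneq u a) => [->|ua]; first by exists b.
  case/connectP: (conn u a) => [[|w p]] /=; first by move=> _ E; rewrite E eqxx in ua.
  by case/andP=> uw _ _; exists w.
pose nuv u := nu adj (unitv R u).
have nupos : forall u, 0 < nuv u.
  move=> u; case: (nb u) => v uv; apply: lt_le_trans (nu_unit_ge1 R adj_irr uv).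
  exact: ltr01.
have nune : forall u, nuv u != 0 by move=> u; rewrite gt_eqF.
case/eigenvalueP: lam_eig => w wK wne.
pose x u := w 0 u / nuv u.
have eig : forall u, \sum_v (if adj u v then x v else 0) = lam * nuv u * x u.
  move=> u; have := congr1 (fun A : 'M[R]_(1, n) => A 0 u) wK; rewrite /= !mxE.
  have -> : lam * nuv u * x u = lam * w 0 u by rewrite /x mulrA (mulrAC lam) mulfK.
  move=> <-; apply: eq_bigr => v _; rewrite mxE adj_sym; case: (adj v u); rewrite ?mulr0 //.
have [u0 xu0] : exists u0, x u0 != 0.
  apply: NNPP => H; move/eqP: wne; apply; apply/matrixP => i j.
  rewrite (ord1 i) mxE; apply/eqP.
  have : ~~ (x j != 0) by apply/negP => Hj; apply: H; exists j.
  by rewrite negbK /x mulf_eq0 invr_eq0 (negbTE (nune j)) orbF.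

pose y u := `|x u|.
have y0 : forall u, 0 <= y u.
  move=> u1; exact: normr_ge0.
pose cu u : vec R n := fun e => y u * unitv R u e.
have cu_nn : forall u, nonneg (cu u).
  by move=> u e; rewrite /cu /unitv; case: (e == u); rewrite ?mulr1 ?mulr0.
have cu_off : forall u e, e != u -> cu u e = 0.
  by move=> u e eu; rewrite /cu /unitv (negbTE eu) mulr0.
pose g u v := if v \in win M (cu u) then pay M (cu u) v else 0.
have g0 : forall u v, 0 <= g u v.
  move=> u v; rewrite /g; case: ifP => // vw.
  apply: le_trans (cu_nn u v) _; exact: ((M_valid _ (cu_nn u)).2 v vw).
have upd_nn : forall (b : vec R n) (e : 'I_n) (z : R), nonneg b -> 0 <= z -> nonneg (upd b e z).
  by move=> b e z bn z0 i; rewrite /upd; case: (i == e).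
have wb : forall u v, u != v -> v \in win M (upd (cu u) v (y v)) -> y v <= g u v.
  move=> u v uv vw.
  have := M_truthful v 0 (cu u) (le_refl 0) (cu_nn u) (y v) (y0 v).
  have -> : upd (cu u) v 0 = cu u.
    apply: functional_extensionality => e; rewrite /upd; case: eqP => // ->.
    by rewrite cu_off // eq_sym.
  rewrite /profit vw subr0 => H; apply: le_trans (le_trans _ H) _; last by rewrite /g; case: ifP; rewrite ?subr0.
  have := (M_valid _ (upd_nn _ v _ (cu_nn u) (y0 v))).2 v vw.
  by rewrite /upd eqxx.
have edge : forall u v, adj u v -> y u * y v <= y u * g u v + y v * g v u.
  move=> u v uv; have uvne : u != v by apply/eqP => E; move: uv; rewrite E adj_irr.
  have vune : v != u by rewrite eq_sym.
  have Ep : upd (cu u) v (y v) = upd (cu v) u (y u).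
    apply: functional_extensionality => e; rewrite /upd /cu /unitv.
    case: (eqVneq e v) => [->|ev]; first by rewrite (negbTE vune) mulr1.
    by case: (eqVneq e u) => [_|eu]; rewrite ?mulr1 ?mulr0.
  have := (M_valid _ (upd_nn _ v _ (cu_nn u) (y0 v))).1.
  move/forallP/(_ u)/forallP/(_ v); rewrite uv /= => /orP[uw|vw].
  - rewrite Ep in uw; have := wb v u vune uw => H.
    apply: (@le_trans _ _ (y v * g v u)); first by rewrite mulrC; apply: ler_wpM2l.
    by rewrite -{1}[y v * g v u]add0r lerD2r mulr_ge0.
  - have := wb u v uvne vw => H.
    apply: (@le_trans _ _ (y u * g u v)); first by apply: ler_wpM2l.
    by rewrite -{1}[y u * g u v]addr0 lerD2l mulr_ge0.
apply: NNPP => Hn.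
have Hup : forall c, nonneg c -> total_pay M c <= r * nu adj c.
  by move=> c cn; rewrite leNgt; apply/negP => H; apply: Hn; exists c; split.
have xx : forall u, y u * y u = x u * x u.
  by move=> u; rewrite -!expr2 real_normK ?num_real.
have tp_ge : forall u, \sum_v (if adj u v then g u v else 0) <= total_pay M (cu u).
  move=> u; rewrite /total_pay [X in _ <= X]big_mkcond /=; apply: ler_sum => v _.
  by case: (adj u v); [exact: lexx | exact: g0].
have tp_le : forall u, y u * total_pay M (cu u) <= r * (nuv u * (x u * x u)).
  move=> u; case: (eqVneq (y u) 0) => [yz|ynz].
    have xz : x u = 0 by apply/eqP; rewrite -normr_eq0; apply/eqP.
    by rewrite yz xz !mul0r mulr0 mulr0.
  have ypos : 0 < y u by rewrite lt_def ynz y0.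
  have Enu : nu adj (cu u) = y u * nuv u by apply: (nu_scale adj_irr ypos).
  have := Hup _ (cu_nn u); rewrite Enu => H.
  apply: le_trans (ler_wpM2l (y0 u) H) _.
  by rewrite -xx mulrCA (mulrA (y u)) (mulrC _ (nuv u)).
pose Sg := \sum_u \sum_v (if adj u v then y u * g u v else 0).
pose Q := \sum_u nuv u * (x u * x u).
have h1 : Sg <= \sum_u y u * total_pay M (cu u).
  apply: ler_sum => u _; apply: le_trans (ler_wpM2l (y0 u) (tp_ge u)).
  rewrite mulr_sumr; apply: ler_sum => v _; case: (adj u v); rewrite ?mulr0 //.
have h2 : \sum_u y u * total_pay M (cu u) <= r * Q.
  by rewrite /Q mulr_sumr; apply: ler_sum => u _; exact: tp_le.
have h3 : Sg = \sum_u \sum_v (if adj u v then y v * g v u else 0).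
  rewrite /Sg exchange_big /=; apply: eq_bigr => u _; apply: eq_bigr => v _.
  by rewrite adj_sym.
have h4 : \sum_u \sum_v (if adj u v then y u * y v else 0) <= Sg + Sg.
  rewrite {2}h3 /Sg -big_split /=; apply: ler_sum => u _.
  rewrite -big_split /=; apply: ler_sum => v _.
  by case: ifP => uv; [exact: edge | rewrite addr0].
have h5 : \sum_u \sum_v (if adj u v then x u * x v else 0) <=
          \sum_u \sum_v (if adj u v then y u * y v else 0).
  apply: ler_sum => u _; apply: ler_sum => v _; case: (adj u v) => //.
  by rewrite -normrM real_ler_norm ?num_real.
have h6 : \sum_u \sum_v (if adj u v then x u * x v else 0) = lam * Q.
  rewrite /Q mulr_sumr; apply: eq_bigr => u _.
  have -> : \sum_v (if adj u v then x u * x v else 0) =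
            x u * \sum_v (if adj u v then x v else 0).
    by rewrite mulr_sumr; apply: eq_bigr => v _; case: (adj u v); rewrite ?mulr0.
  by rewrite eig mulrCA -mulrA.
have Qpos : 0 < Q.
  rewrite /Q (bigD1 u0) //=.
  have t1 : 0 < nuv u0 * (x u0 * x u0).
    by rewrite -xx mulr_gt0 // mulr_gt0 // normr_gt0.
  have t2 : 0 <= \sum_(i | i != u0) nuv i * (x i * x i).
    by apply: sumr_ge0 => i _; rewrite -xx mulr_ge0 // ?mulr_ge0 // ltW.
  apply: lt_le_trans t1 _; rewrite lerDl //.
have rr : r + r < lam.
  by move: rlt; rewrite ltr_pdivlMr // mulrDr mulr1.
have Hle : lam * Q <= (r + r) * Q.
  rewrite -h6 mulrDl; apply: le_trans h5 _; apply: le_trans h4 _.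
  exact: lerD (le_trans h1 h2) (le_trans h1 h2).
have Hlt : (r + r) * Q < lam * Q by rewrite ltr_pM2r.
by move: (lt_le_trans Hlt Hle); rewrite ltxx.
Qed.
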